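(* Let $q$ be a prime power, $4\le n\le q$, $\alpha_1,\dots,\alpha_n\in\mathbb{F}_q$ distinct, $u_1,\dots,u_n\in\mathbb{F}_q^*$, and $H\in\mathbb{F}_q^{3\times n}$ with $H_{ab}=u_b\alpha_b^{a-1}$ (so $\ker H$ is a length-$n$ Reed–Solomon-type code of distance $4$). Then the number of $e\in\mathbb{F}_q^n$ with $|e|=2$ for which there exists $e'\in\mathbb{F}_q^n$, $e'\ne e$, $|e'|\le 2$, $He'=He$, is at most $$\frac{(n-2)(n-3)}{2(q-1)}\cdot(q-1)^2\binom{n}{2}.$$ That is, the fraction of weight-2 errors that are not the unique minimum-weight error with their syndrome is at most $\frac{(n-2)(n-3)}{2(q-1)}$.
   Context: $|e|$ denotes the Hamming weight (number of nonzero coordinates) of $e\in\mathbb{F}_q^n$. *)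

(* Defs.v *)
From mathcomp Require Import all_boot all_order all_algebra.
Set Implicit Arguments. Unset Strict Implicit. Unset Printing Implicit Defensive.
Import GRing.Theory Num.Theory.
Local Open Scope ring_scope.

Definition hwt (F : finFieldType) (n : nat) (v : 'rV[F]_n) : nat :=
  #|[set i : 'I_n | v 0 i != 0]|.

(* The 3 x n parity-check matrix H_{ab} = u_b * alpha_b^(a-1), a = 1..3
   (rows indexed 0..2, so the exponent is the row index). *)
Definition rsH (F : finFieldType) (n : nat) (alpha u : 'I_n -> F) : 'M[F]_(3, n) :=
  \matrix_(a < 3, b < n) (u b * alpha b ^+ a).

Definition syndrome (F : finFieldType) (n : nat) (H : 'M[F]_(3, n)) (e : 'rV[F]_n)
  : 'cV[F]_3 := H *m e^T.

Definition bad_errors (F : finFieldType) (n : nat) (H : 'M[F]_(3, n)) : {set 'rV[F]_n} :=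
  [set e : 'rV[F]_n | (hwt e == 2%N) &&
     [exists e' : 'rV[F]_n, [&& e' != e, (hwt e' <= 2)%N & syndrome H e' == syndrome H e]]].

(* Main.v *)
Set Warnings "-notation-overridden,-ambiguous-paths".
Require Import Defs.
From mathcomp Require Import all_boot all_order all_algebra ring zify.
Import Order.TTheory GRing.Theory Num.Theory.
Local Open Scope ring_scope.
Set Implicit Arguments. Unset Strict Implicit. Unset Printing Implicit Defensive.
Set Warnings "-notation-overridden,-ambiguous-paths".

Definition supp (F : finFieldType) (n : nat) (v : 'rV[F]_n) : {set 'I_n} :=
  [set i : 'I_n | v 0 i != 0].

Lemma syndromeE (F : finFieldType) (n : nat) (alpha u : 'I_n -> F) v (a : 'I_3) :
  syndrome (rsH alpha u) v a 0 = \sum_b u b * alpha b ^+ a * v 0 b.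
Proof. by rewrite /syndrome !mxE; apply: eq_bigr => b _; rewrite !mxE. Qed.

Lemma kill3 (F : finFieldType) (n : nat) (alpha u : 'I_n -> F)
  (halpha : injective alpha) (hu : forall b, u b != 0) v :
  syndrome (rsH alpha u) v = 0 -> (#|supp v| <= 3)%N -> v = 0.
Proof.
move=> hs hc; apply/rowP => j; rewrite mxE; apply/eqP; apply: contraT => hj.
have jS : j \in supp v by rewrite inE.
pose S' := supp v :\ j.
pose s := [seq alpha k | k <- enum S'].
pose P := \prod_(x <- s) ('X - x%:P).
have sP : (size P <= 3)%N.
  rewrite size_prod_XsubC size_map -cardE.
  move: hc; rewrite (cardsD1 j) jS /= -/S'; by [].
have H0 : \sum_b u b * v 0 b * P.[alpha b] = 0.
  transitivity (\sum_(i < 3) P`_i * syndrome (rsH alpha u) v i 0); last first.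
    by apply: big1 => i _; rewrite hs mxE mulr0.
  under eq_bigr do rewrite (horner_coef_wide _ sP) mulr_sumr.
  rewrite exchange_big /=; apply: eq_bigr => i _.
  rewrite syndromeE mulr_sumr; apply: eq_bigr => b _.
  by ring.
move: H0; rewrite (bigD1 j) //= big1 ?addr0 => [|b hb].
  move/eqP; rewrite !mulf_eq0 (negbTE (hu j)) (negbTE hj) /=.
  rewrite -/(root P (alpha j)) root_prod_XsubC.
  move/mapP => -[k]; rewrite mem_enum !inE => /andP[hk _] /halpha hkj.
  by move: hk; rewrite hkj eqxx.
have [hv|hv] := eqVneq (v 0 b) 0; first by rewrite hv mulr0 mul0r.
have : root P (alpha b).
  by rewrite root_prod_XsubC; apply: map_f; rewrite mem_enum !inE hb hv.
by move/rootP => ->; rewrite mulr0.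
Qed.

Section S.
Variables (F : finFieldType) (n : nat) (alpha u : 'I_n -> F)
  (halpha : injective alpha) (hu : forall b, u b != 0).
Let H := rsH alpha u.

Lemma syndromeB (e e' : 'rV[F]_n) : syndrome H (e - e') = syndrome H e - syndrome H e'.
Proof. by rewrite /syndrome linearB /= mulmxBr. Qed.

Lemma bad_char e : e \in bad_errors H ->
  #|supp e| = 2%N /\ exists e', [/\ supp e' \subset ~: supp e, #|supp e'| = 2%N &
     syndrome H e' = syndrome H e].
Proof.
rewrite inE => /andP[/eqP he /existsP[e' /and3P[ne hw /eqP hs]]].
split=> //; exists e'.
have hd : syndrome H (e - e') = 0 by rewrite syndromeB hs subrr.
have sub : supp (e - e') \subset supp e :|: supp e'.
  apply/subsetP => i; rewrite !inE !mxE; apply: contraR.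
  by rewrite negb_or !negbK => /andP[/eqP -> /eqP ->]; rewrite subrr.
have big4 : (3 < #|supp e :|: supp e'|)%N.
  apply: (@leq_trans #|supp (e - e')|); last exact: subset_leq_card.
  rewrite ltnNge; apply/negP => h3.
  by move: ne; rewrite eq_sym -subr_eq0 (kill3 halpha hu hd h3) eqxx.
move: big4; rewrite cardsU; rewrite /hwt -/(supp e) -/(supp e') in he hw.
rewrite -/(supp e) he => h.
have hI : #|supp e :&: supp e'| = 0%N by move: hw h; move: (#|supp e'|) (#|_ :&: _|) => b c; lia.
have hw2 : #|supp e'| = 2%N by move: hw h; move: (#|supp e'|) (#|_ :&: _|) => b c; lia.
split=> //; apply/subsetP => x xe'; rewrite inE; apply/negP => xe.
by move/eqP: hI; rewrite cards_eq0 => /eqP/setP/(_ x); rewrite in_setI xe xe' in_set0.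
Qed.

Lemma suppN (v : 'rV[F]_n) j : j \notin supp v -> v 0 j = 0.
Proof. by rewrite inE negbK => /eqP. Qed.

Definition fiber (T T' : {set 'I_n}) : {set 'rV[F]_n} :=
  [set e | (supp e == T) && [exists e', (supp e' == T') && (syndrome H e' == syndrome H e)]].

Lemma fiber_card (T T' : {set 'I_n}) : #|T| = 2%N -> T' \subset ~: T -> #|T'| = 2%N ->
  (#|fiber T T'| <= #|F| - 1)%N.
Proof.
move=> hT hT'T hT'.
have [i iT] : exists i, i \in T by apply/set0Pn; rewrite -card_gt0 hT.
have iT' : i \notin T' by apply/negP => /(subsetP hT'T); rewrite inE iT.
have inj : {in fiber T T' &, injective (fun e : 'rV[F]_n => e 0 i)}.
  move=> e1 e2; rewrite !inE => /andP[/eqP h1 /existsP[e1' /andP[/eqP h1' /eqP s1]]].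
  move=> /andP[/eqP h2 /existsP[e2' /andP[/eqP h2' /eqP s2]]] /= hi.
  pose d := (e1 - e1') - (e2 - e2').
  have hd : syndrome H d = 0 by rewrite /d !syndromeB s1 s2 !subrr.
  have sub : supp d \subset (T :|: T') :\ i.
    apply/subsetP => j; apply: contraLR; rewrite in_setD1.
    rewrite negb_and negbK => /orP[/eqP ->|hj].
      by rewrite inE !mxE hi (suppN (v:=e1') (j:=i)) ?h1' // (suppN (v:=e2') (j:=i)) ?h2' // !subr0 subrr eqxx.
    move: hj; rewrite in_setU negb_or => /andP[jT jT'].
    rewrite inE !mxE !suppN ?h1 ?h2 ?h1' ?h2' //. by rewrite !subrr eqxx.
  have c3 : (#|supp d| <= 3)%N.
    apply: (leq_trans (subset_leq_card sub)).
    have := cardsD1 i (T :|: T'); rewrite in_setU iT /= => hc.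
    have := cardsU T T'; rewrite hT hT' => hu'.
    move: hc hu'; move: (#|_ :\ i|) (#|T :|: T'|) (#|T :&: T'|) => a b c; lia.
  have d0 := kill3 halpha hu hd c3.
  apply/rowP => j.
  have [jT|jT] := boolP (j \in T); last by rewrite !suppN ?h1 ?h2.
  have jT' : j \notin T' by apply/negP => /(subsetP hT'T); rewrite inE jT.
  move/rowP: d0 => /(_ j); rewrite !mxE (suppN (v:=e1') (j:=j)) ?h1' // (suppN (v:=e2') (j:=j)) ?h2' //.
  by rewrite !subr0 => /eqP; rewrite subr_eq0 => /eqP.
rewrite -(card_in_imset inj) subn1 -(cardsC1 (0 : F)).
apply: subset_leq_card; apply/subsetP => x /imsetP[e]; rewrite inE => /andP[/eqP he _] ->.
by rewrite in_setC1; rewrite -he inE in iT.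
Qed.
End S.

Lemma card_bigcup_le (I T : finType) (P : {pred I}) (G : I -> {set T}) :
  (#|\bigcup_(i in P) G i| <= \sum_(i in P) #|G i|)%N.
Proof.
elim/big_ind2: _ => //; first by rewrite cards0.
move=> A m B k hA hB; rewrite cardsU.
by apply: leq_trans (leq_subr _ _) _; apply: leq_add.
Qed.

Theorem mainTheorem9 (F : finFieldType) (n : nat) (alpha u : 'I_n -> F)
  (hn4 : (4 <= n)%N) (hnq : (n <= #|F|)%N)
  (halpha : injective alpha) (hu : forall b, u b != 0) :
  (#|bad_errors (rsH alpha u)|%:R : rat) <=
    ((n - 2) * (n - 3))%:R / (2 * (#|F| - 1))%:R
      * ((#|F| - 1) ^ 2 * 'C(n, 2))%:R.
Proof.
pose P2 := [set T : {set 'I_n} | #|T| == 2%N].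
pose Q (T : {set 'I_n}) := [set T' : {set 'I_n} | T' \subset ~: T & #|T'| == 2%N].
have sub : bad_errors (rsH alpha u) \subset
    \bigcup_(T in P2) \bigcup_(T' in Q T) fiber alpha u T T'.
  apply/subsetP => e he; have [h2 [e' [s1 s2 s3]]] := bad_char halpha hu he.
  apply/bigcupP; exists (supp e); first by rewrite inE h2.
  apply/bigcupP; exists (supp e'); first by rewrite inE s1 s2 eqxx.
  rewrite inE eqxx /=; apply/existsP; exists e'; by rewrite eqxx s3 eqxx.
have hb : (#|bad_errors (rsH alpha u)| <= 'C(n, 2) * ('C(n - 2, 2) * (#|F| - 1)))%N.
  apply: (leq_trans (subset_leq_card sub)); apply: (leq_trans (card_bigcup_le _ _)).
  have -> : 'C(n, 2) = #|P2| by rewrite card_draws card_ord.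
  rewrite -sum_nat_const; apply: leq_sum => T; rewrite inE => /eqP hT.
  apply: (leq_trans (card_bigcup_le _ _)).
  have -> : 'C(n - 2, 2) = #|Q T|.
    rewrite cards_draws; congr 'C(_, _); have := cardsC T; rewrite hT card_ord.
    move: (#|~: T|) => a; lia.
  rewrite -sum_nat_const; apply: leq_sum => T'; rewrite inE => /andP[hs /eqP hT'].
  exact: fiber_card.
have hq : (#|F| - 1)%:R != 0 :> rat by rewrite pnatr_eq0; move: hnq hn4; lia.
have e2 : ((n - 2) * (n - 3) = 2 * 'C(n - 2, 2))%N.
  have := mul_bin_diag (n - 2) 1; rewrite bin1.
  have -> : (n - 2).-1 = (n - 3)%N by lia.
  by [].
rewrite e2; rewrite -(ler_nat rat) in hb; apply: (le_trans hb) => {hb}.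
rewrite le_eqVlt; apply/orP; left; apply/eqP.
rewrite !natrM.
move: hq; move: ((#|F| - 1)%:R : rat) ('C(n - 2, 2)%:R : rat) ('C(n, 2)%:R : rat) => b a c hq.
field.
by [].
Qed.
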